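(* Let $m\ge2$, $n\ge1$, and let $\mathcal{A}\in\mathbb{R}_+^{[m,n]}$ be weakly irreducible. Let $k$ be any fixed positive integer, and let $\mathcal{S}_k$ be the set of tensors $\mathcal{B}\in\mathbb{R}_+^{[k,n]}$ with $r_i(\mathcal{B})\neq0$ for all $i\in[n]$. Then the maximum and minimum below are attained and \[\max_{\mathcal{B}\in\mathcal{S}_k}\ \min_{i\in[n]}\frac{r_i(\mathcal{A}\mathcal{B})}{(r_i(\mathcal{B}))^{m-1}}=\rho(\mathcal{A})=\min_{\mathcal{B}\in\mathcal{S}_k}\ \max_{i\in[n]}\frac{r_i(\mathcal{A}\mathcal{B})}{(r_i(\mathcal{B}))^{m-1}}.\]
   Context: $[n]=\{1,\ldots,n\}$. $\mathbb{R}_+^{[m,n]}$ denotes the set of order $m$, dimension $n$ tensors $\mathcal{A}=(a_{i_1\cdots i_m})$, $i_j\in[n]$, with nonnegative real entries (for order $1$: nonnegative vectors). A tensor $\mathcal{A}\in\mathbb{R}_+^{[m,n]}$ is called weakly irreducible (as defined in this paper) if for every nonempty proper subset $I\subset[n]$ there exist $i_1,\ldots,i_m$ with $a_{i_1i_2\cdots i_m}>0$, $i_1\in I$ and $i_j\in[n]\setminus I$ for all $j\in\{2,\ldots,m\}$. For a tensor $\mathcal{T}=(t_{i_1\cdots i_p})$ of order $p$ and dimension $n$, $r_i(\mathcal{T})=\sum_{i_2,\ldots,i_p=1}^n|t_{ii_2\cdots i_p}|$ (for $p=1$, $r_i(\mathcal{T})=|t_i|$). General product: for $\mathcal{A}$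 of order $m\ge2$ and $\mathcal{B}$ of order $k\ge1$, $\mathcal{A}\mathcal{B}=(c_{i\alpha_1\cdots\alpha_{m-1}})$ is the order $(m-1)(k-1)+1$, dimension $n$ tensor with $c_{i\alpha_1\cdots\alpha_{m-1}}=\sum_{i_2,\ldots,i_m=1}^n a_{ii_2\cdots i_m}b_{i_2\alpha_1}\cdots b_{i_m\alpha_{m-1}}$, $i\in[n]$, $\alpha_j\in[n]^{k-1}$ (where $b_{j\alpha}$ with $\alpha=(j_2,\ldots,j_k)$ means $b_{jj_2\cdots j_k}$). Eigenvalues: $\lambda\in\mathbb{C}$ is an eigenvalue of $\mathcal{A}$ if there is a nonzero $x\in\mathbb{C}^n$ with $\sum_{i_2,\ldots,i_m=1}^n a_{ii_2\cdots i_m}x_{i_2}\cdots x_{i_m}=\lambda x_i^{m-1}$ for all $i\in[n]$; $\rho(\mathcal{A})$ is the maximum modulus of the eigenvalues of $\mathcal{A}$. *)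

(* Defs.v *)
From HB Require Import structures.
From mathcomp Require Import all_boot all_algebra.
From mathcomp Require Import Rstruct complex.
From Stdlib Require Import Reals.
Set Implicit Arguments. Unset Strict Implicit. Unset Printing Implicit Defensive.
Import GRing.Theory Num.Theory.
Local Open Scope ring_scope.

Notation RR := Rdefinitions.R.

(* A (real) tensor of order p and dimension n: entry t_{i_1 i_2 ... i_p} is
   [T i1 (tail)], where [tail : {ffun 'I_p.-1 -> 'I_n}] lists (i_2,...,i_p).
   (Used for p >= 1.) *)
Definition tensor (p n : nat) := 'I_n -> {ffun 'I_p.-1 -> 'I_n} -> RR.

Definition nonneg_tensor (p n : nat) (T : tensor p n) : Prop :=
  forall i a, 0 <= T i a.

Definition weakly_irreducible (m n : nat) (A : tensor m n) : Prop :=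
  forall I : {set 'I_n}, I != set0 -> I != setT ->
    exists i (a : {ffun 'I_m.-1 -> 'I_n}),
      [/\ 0 < A i a, i \in I & forall j, a j \notin I].

Definition rsum (n : nat) (J : finType) (T : 'I_n -> J -> RR) (i : 'I_n) : RR :=
  \sum_(a : J) `|T i a|.

(* General product AB for A of order m, B of order k: the result has order
   (m-1)(k-1)+1, with entries c_{i alpha_1 ... alpha_{m-1}}, alpha_j in [n]^{k-1};
   its tail index is the (m-1)-tuple (alpha_1,...,alpha_{m-1}). *)
Definition gprod (m k n : nat) (A : tensor m n) (B : tensor k n) :
  'I_n -> {ffun 'I_m.-1 -> {ffun 'I_k.-1 -> 'I_n}} -> RR :=
  fun i al => \sum_(a : {ffun 'I_m.-1 -> 'I_n})
                 A i a * \prod_(j < m.-1) B (a j) (al j).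

Definition is_eigenvalue (m n : nat) (A : tensor m n) (l : RR[i]) : Prop :=
  exists x : 'I_n -> RR[i], (exists i, x i != 0) /\
    forall i, \sum_(a : {ffun 'I_m.-1 -> 'I_n})
                 (A i a)%:C%C * \prod_(j < m.-1) x (a j) = l * x i ^+ m.-1.

Definition spectral_radius (m n : nat) (A : tensor m n) (r : RR) : Prop :=
  (exists l, is_eigenvalue A l /\ `|l| = r%:C%C) /\
  (forall l, is_eigenvalue A l -> `|l| <= r%:C%C).

Definition S_k (k n : nat) (B : tensor k n) : Prop :=
  nonneg_tensor B /\ forall i, rsum B i != 0.

Definition tratio (m k n : nat) (A : tensor m n) (B : tensor k n) (i : 'I_n) : RR :=
  rsum (gprod A B) i / (rsum B i) ^+ m.-1.

Definition is_min_over (n : nat) (f : 'I_n -> RR) (v : RR) : Prop :=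
  (forall i, v <= f i) /\ exists i, f i = v.
Definition is_max_over (n : nat) (f : 'I_n -> RR) (v : RR) : Prop :=
  (forall i, f i <= v) /\ exists i, f i = v.

(* Main.v *)
Require Import Defs.
From HB Require Import structures.
From mathcomp Require Import all_boot all_order all_algebra.
From mathcomp Require Import Rstruct complex.
From mathcomp Require Import ring lra zify.
From mathcomp Require Import boolp classical_sets reals interval_inference topology normedtype.
Set Implicit Arguments. Unset Strict Implicit. Unset Printing Implicit Defensive.
Import Order.TTheory GRing.Theory Num.Theory numFieldTopology.Exports numFieldNormedType.Exports.
Local Open Scope ring_scope.

Section Alg.
Variables (m n : nat) (A : tensor m n).
Hypothesis A0 : nonneg_tensor A.

Definition Fm (y : 'I_n -> RR) i :=
  \sum_(a : {ffun 'I_m.-1 -> 'I_n}) A i a * \prod_(j < m.-1) y (a j).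

Lemma Fm_ge0 y i : (forall j, 0 <= y j) -> 0 <= Fm y i.
Proof.
move=> y0; apply: sumr_ge0 => a _; apply: mulr_ge0; first exact: A0.
by apply: prodr_ge0.
Qed.

Lemma Fm_mono u v i : (forall j, 0 <= u j <= v j) -> Fm u i <= Fm v i.
Proof.
move=> uv; apply: ler_sum => a _; apply: ler_wpM2l; first exact: A0.
by apply: ler_prod.
Qed.

Lemma Fm_hom c y i : Fm (fun j => c * y j) i = c ^+ m.-1 * Fm y i.
Proof.
rewrite /Fm mulr_sumr; apply: eq_bigr => a _.
by rewrite big_split /= prodr_const card_ord mulrCA.
Qed.

Lemma Fm_term a y i : (forall j, 0 <= y j) ->
  A i a * \prod_(j < m.-1) y (a j) <= Fm y i.
Proof.
move=> y0; rewrite /Fm (bigD1 a) //= lerDl; apply: sumr_ge0 => b _.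
by apply: mulr_ge0; [exact: A0| apply: prodr_ge0].
Qed.

Lemma Fm_diff a u v i : (forall j, 0 <= u j <= v j) ->
  A i a * (\prod_(j < m.-1) v (a j) - \prod_(j < m.-1) u (a j)) <= Fm v i - Fm u i.
Proof.
move=> uv.
have -> : Fm v i - Fm u i = \sum_b A i b * (\prod_(j < m.-1) v (b j) - \prod_(j < m.-1) u (b j)).
  by rewrite /Fm -sumrB; apply: eq_bigr => b _; rewrite mulrBr.
rewrite (bigD1 a) //= lerDl; apply: sumr_ge0 => b _.
apply: mulr_ge0; first exact: A0.
by rewrite subr_ge0; apply: ler_prod.
Qed.

Lemma rsum_gprod k (B : tensor k n) i : nonneg_tensor B ->
  rsum (gprod A B) i = Fm (rsum B) i.
Proof.
move=> B0; rewrite /rsum /gprod /Fm.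
under eq_bigr => al _.
  rewrite ger0_norm; last first.
    apply: sumr_ge0 => a _; apply: mulr_ge0; first exact: A0.
    by apply: prodr_ge0 => j _; exact: B0.
  over.
rewrite exchange_big /=; apply: eq_bigr => a _.
rewrite -mulr_sumr; congr (_ * _).
rewrite -(bigA_distr_bigA (fun j b => B (a j) b)); apply: eq_bigr => j _.
by apply: eq_bigr => b _; rewrite ger0_norm //; exact: B0.
Qed.

End Alg.

Section CW.
Variables (m n : nat) (A : tensor m n).
Hypothesis A0 : nonneg_tensor A.
Variables (x : 'I_n -> RR) (rho : RR).
Hypothesis x0 : forall i, 0 < x i.
Hypothesis xe : forall i, Fm A x i = rho * x i ^+ m.-1.

Lemma CW_lower y v : (forall i, 0 <= y i) -> (exists i, 0 < y i) ->
  (forall i, v * y i ^+ m.-1 <= Fm A y i) -> v <= rho.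
Proof.
move=> y0 [j yj] H.
case: (@arg_maxP _ _ _ j predT (fun i => y i / x i) isT) => i0 _ Hmax.
set t := y i0 / x i0 in Hmax.
have tj : 0 < t by apply: lt_le_trans (Hmax j isT); rewrite divr_gt0.
have yle : forall l, 0 <= y l <= t * x l.
  move=> l; rewrite y0 /=; rewrite -ler_pdivrMr //; exact: Hmax.
have yi0 : y i0 = t * x i0 by rewrite /t divfK // gt_eqF.
have := le_trans (H i0) (Fm_mono A0 i0 yle).
rewrite Fm_hom xe mulrCA -exprMn -yi0 => h.
have yp : 0 < y i0 ^+ m.-1 by rewrite exprn_gt0 // yi0 mulr_gt0.
by rewrite -(ler_pM2r yp).
Qed.

Lemma CW_upper (j : 'I_n) y v : (forall i, 0 < y i) ->
  (forall i, Fm A y i <= v * y i ^+ m.-1) -> rho <= v.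
Proof.
move=> y0 H.
case: (@arg_minP _ _ _ j predT (fun i => y i / x i) isT) => i0 _ Hmin.
set t := y i0 / x i0 in Hmin.
have tj : 0 < t by rewrite divr_gt0.
have yle : forall l, 0 <= t * x l <= y l.
  move=> l; apply/andP; split; first by rewrite mulr_ge0 // ltW.
  by rewrite -ler_pdivlMr //; exact: Hmin.
have yi0 : y i0 = t * x i0 by rewrite /t divfK // gt_eqF.
have := le_trans (Fm_mono A0 i0 yle) (H i0).
rewrite Fm_hom xe mulrCA -exprMn -yi0 => h.
have yp : 0 < y i0 ^+ m.-1 by rewrite exprn_gt0 // yi0 mulr_gt0.
by rewrite -(ler_pM2r yp).
Qed.
End CW.

Lemma pow_bound (a e : RR) q : 0 <= a -> 0 <= e -> e <= 1 ->
  (a + e) ^+ q <= a ^+ q + e * (q%:R * (a + 1) ^+ q).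
Proof.
move=> a0 e0 e1; elim: q => [|q IH]; first by rewrite !expr0 mulr0n mul0r mulr0 addr0.
have X0 : 0 <= a ^+ q by rewrite exprn_ge0.
have XY : a ^+ q <= (a + 1) ^+ q by rewrite lerXn2r ?nnegrE ?addr_ge0 // lerDl.
have Y1 : (a + 1) ^+ q <= (a + 1) ^+ q * (a + 1).
  by rewrite ler_peMr ?exprn_ge0 ?addr_ge0 // lerDr.
have Y0 : 0 <= (a+1) ^+ q by rewrite exprn_ge0 // addr_ge0.
rewrite !exprSr.
apply: le_trans (_ : (a ^+ q + e * (q%:R * (a + 1) ^+ q)) * (a + e) <= _).
  by rewrite ler_wpM2r // addr_ge0.
set X := a ^+ q in X0 XY *; set Y := (a + 1) ^+ q in XY Y1 Y0 *.
have q0 : 0 <= q%:R :> RR by rewrite ler0n.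
have h1 : e * X <= e * (Y * (a + 1)) by rewrite ler_wpM2l // (le_trans XY).
have h2 : (e * q%:R * Y) * (a + e) <= (e * q%:R * Y) * (a + 1).
  by rewrite ler_wpM2l ?lerD2l // !mulr_ge0.
rewrite -natr1.
nra.
Qed.

Lemma pow_gap (r a c : RR) q : 0 <= r -> 0 <= a -> r * a ^+ q < c ->
  exists2 e, 0 < e & forall e', 0 < e' <= e -> r * (a + e') ^+ q < c.
Proof.
move=> r0 a0 hc.
set K := q%:R * (a + 1) ^+ q.
have K0 : 0 <= K by rewrite mulr_ge0 ?ler0n // exprn_ge0 // addr_ge0.
set g := c - r * a ^+ q.
have g0 : 0 < g by rewrite subr_gt0.
have d0 : 0 < r * K + 1 by rewrite ltr_wpDl // mulr_ge0.
exists (Num.min 1 (g / (r * K + 1))).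
  by rewrite lt_min ltr01 divr_gt0.
move=> e' /andP[e'0]; rewrite le_min => /andP[e'1 e'g].
have := pow_bound q a0 (ltW e'0) e'1; rewrite -/K => hb.
have hb' : r * (a + e') ^+ q <= r * a ^+ q + r * (e' * K).
  by rewrite -mulrDr ler_wpM2l.
have : e' * (r * K + 1) <= g by rewrite -ler_pdivlMr.
have h3 : 0 <= e' * (r * K) by apply: mulr_ge0; [exact: ltW | exact: mulr_ge0].
rewrite /g => h4.
have e5 : r * (e' * K) = e' * (r * K) by rewrite mulrCA.
rewrite e5 in hb'.
rewrite mulrDr mulr1 in h4.
lra.
Qed.

Lemma fin_common n (a : RR) (P : 'I_n -> RR -> Prop) :
  (forall i, exists2 e, a < e & forall e', a < e' <= e -> P i e') ->
  exists2 e, a < e & forall i, P i e.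
Proof.
move=> H.
suff [e ae He] : exists2 e, a < e & forall e', a < e' <= e ->
    forall i, i \in enum 'I_n -> P i e'.
  by exists e => // i; apply: He; [rewrite ae lexx | rewrite mem_enum].
elim: (enum 'I_n) => [|i s [e2 ae2 He2]].
  by exists (a + 1) => //; rewrite ltrDl ltr01.
have [e1 ae1 He1] := H i.
exists (Num.min e1 e2); first by rewrite lt_min ae1.
move=> e' /andP[ae']; rewrite le_min => /andP[h1 h2] j; rewrite inE => /orP[/eqP->|js].
  by apply: He1; rewrite ae'.
by apply: He2 => //; rewrite ae'.
Qed.

Local Open Scope classical_set_scope.

Section Top.
Variables (R : realType) (n q : nat) (J : finType).
Variables (c : 'I_n -> J -> R) (f : J -> 'I_q -> 'I_n).

Definition Fg (v : 'I_n -> R) i := \sum_(a : J) c i a * \prod_(j < q) v (f a j).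

Lemma clus (F : set_system 'rV[R]_n) (x : 'rV[R]_n) (g : 'rV[R]_n -> R) :
  cluster F x -> continuous g -> F [set v | 0 <= g v] -> 0 <= g x.
Proof.
move=> clx gc FS.
have cl : closed (g @^-1` [set r : R | 0 <= r]).
  by apply: preimage_closed; [move=> v _; exact: gc | exact: closed_ge].
apply: cl => B hB; exact: clx FS hB.
Qed.

Lemma box_compact : compact [set v : 'rV[R]_n | forall i, `[(0:R), 1]%classic (v ord0 i)].
Proof.
have := @rV_compact R n (fun=> `[(0:R), 1]%classic).
move=> h; have h2 := h (fun=> @segment_compact _ 0 1).
exact: h2.
Qed.

Lemma cont_Fg i : continuous (fun v : 'rV[R]_n => Fg (fun j => v ord0 j) i).
Proof.
rewrite /Fg; apply: continuous_big => [|a _ v]; first exact: add_continuous.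
apply: continuousM; first exact: cst_continuous.
have h : continuous (fun x : 'rV[R]_n => \prod_(j < q) x ord0 (f a j)).
  apply: continuous_big => [|j _]; first exact: mul_continuous.
  exact: coord_continuous.
exact: h.
Qed.

Lemma contD (s t : 'rV[R]_n -> R) : continuous s -> continuous t ->
  continuous (fun v => s v + t v).
Proof.
move=> hs ht.
have h : continuous (fun v => \big[+%R/0]_(b <- [:: true; false]) (if b then s v else t v)).
  apply: continuous_big => [|b _]; first exact: add_continuous.
  by case: b.
have e : (fun v => \big[+%R/0]_(b <- [:: true; false]) (if b then s v else t v)) =
  (fun v => s v + t v).
  by apply/funext => v; rewrite !big_cons big_nil addr0.
by rewrite -e.
Qed.

Lemma contB (s t : 'rV[R]_n -> R) : continuous s -> continuous t ->
  continuous (fun v => s v - t v).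
Proof.
move=> hs ht.
have h : continuous (fun v => s v + (-1) * t v).
  apply: contD => //.
  have h2 : continuous (fun v : 'rV[R]_n => (-1 : R) * t v).
    move=> v; apply: (@continuousM _ _ (fun=> (-1:R)) t v); [exact: cst_continuous | exact: ht].
  exact: h2.
have e : (fun v => s v + (-1) * t v) = (fun v => s v - t v).
  by apply/funext => v; rewrite mulN1r.
by rewrite -e.
Qed.

Lemma cont_pow i : continuous (fun v : 'rV[R]_n => \prod_(j < q) v ord0 i).
Proof.
apply: continuous_big => [|j _]; first exact: mul_continuous.
exact: coord_continuous.
Qed.

Lemma limit_point (rh : R) (zf : nat -> 'I_n -> R) :
  (forall N, [/\ forall i, 0 <= zf N i <= 1, \sum_i zf N i = 1 &
     forall i, (rh - N.+1%:R^-1) * zf N i ^+ q <= Fg (zf N) i]) ->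
  exists x : 'I_n -> R, [/\ forall i, 0 <= x i, exists i, x i != 0 &
     forall i, rh * x i ^+ q <= Fg x i].
Proof.
move=> hz.
pose Z N : 'rV[R]_n := \row_i zf N i.
have hZ N : (fun j => Z N ord0 j) = zf N by apply/funext => j; rewrite mxE.
have h := @box_compact (Z @ \oo).
have h2 : (Z @ \oo) [set v : 'rV[R]_n | forall i, `[(0:R), 1]%classic (v ord0 i)].
  exists 0%N => // N _ /= i; rewrite mxE /= in_itv /=; by case: (hz N).
case: (h _ h2) => x [Kx clx].
have x0 : forall i, 0 <= x ord0 i.
  by move=> i; move: (Kx i); rewrite /= in_itv => /andP[].
have key : forall N i, (rh - N.+1%:R^-1) * x ord0 i ^+ q <= Fg (fun j => x ord0 j) i.
  move=> N i.
  pose g (v : 'rV[R]_n) := Fg (fun j => v ord0 j) i - (rh - N.+1%:R^-1) * \prod_(j < q) v ord0 i.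
  have gc : continuous g.
    apply: contB; first exact: cont_Fg.
    move=> v; apply: (@continuousM _ _ (fun=> (rh - N.+1%:R^-1)) (fun v : 'rV[R]_n => \prod_(j < q) v ord0 i) v).
      exact: cst_continuous.
    exact: cont_pow.
  have := clus clx gc.
  rewrite /g subr_ge0 prodr_const card_ord; apply.
  exists N => // M /= hM; rewrite subr_ge0 hZ prodr_const card_ord mxE.
  case: (hz M) => h0 _ h3; apply: le_trans (h3 i).
  apply: ler_wpM2r; first by rewrite exprn_ge0 //; case/andP: (h0 i).
  by rewrite lerD2l lerN2 lef_pV2 ?posrE ?ltr0n // ler_nat ltnS.
exists (fun j => x ord0 j); split => //.
- have : 1 <= \sum_i x ord0 i.
    pose g (v : 'rV[R]_n) := \sum_i v ord0 i - 1.
    have gc : continuous g.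
      apply: contB; last exact: cst_continuous.
      by apply: continuous_big => [|j _]; [exact: add_continuous | exact: coord_continuous].
    have := clus clx gc; rewrite /g subr_ge0; apply.
    exists 0%N => // M _ /=; rewrite subr_ge0.
    under eq_bigr do rewrite mxE.
    by case: (hz M) => _ -> _.
  move=> hs; have [//|hn] := pselect (exists i, x ord0 i != 0).
  exfalso; move: hs; rewrite big1 ?ler10 // => i _.
  apply/eqP; apply/negPn/negP => hi; apply: hn; exists i; exact: hi.
- move=> i; rewrite leNgt; apply/negP => hlt.
  set X := x ord0 i ^+ q in hlt key; set Fv := Fg (fun j => x ord0 j) i in hlt key.
  have X0 : 0 <= X by rewrite exprn_ge0.
  have [hX|hX] := eqVneq X 0.
    have := key 0%N i; rewrite -/X -/Fv hX mulr0 => h0.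
    by move: hlt; rewrite hX mulr0 ltNge h0.
  have Xp : 0 < X by rewrite lt_def hX.
  set d := (rh * X - Fv) / X.
  have d0 : 0 < d by rewrite divr_gt0 // subr_gt0.
  have di : 0 <= d^-1 by rewrite invr_ge0 ltW.
  have hN := archi_boundP di.
  set N := Num.bound _ in hN.
  have eN : N.+1%:R^-1 < d.
    rewrite invf_plt ?posrE ?ltr0n //; apply: lt_le_trans hN _; rewrite ler_nat.
    exact: leqnSn.
  have e1 : d * X = rh * X - Fv by rewrite /d divfK // gt_eqF.
  have e2 : N.+1%:R^-1 * X < d * X by rewrite ltr_pM2r.
  have := key N i; rewrite -/X -/Fv mulrBl.
  set a := N.+1%:R^-1 * X in e2 *; set b := rh * X in e1 hlt *; set dd := d * X in e1 e2.
  lra.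
Qed.
End Top.

Local Close Scope classical_set_scope.
From mathcomp Require Import fintype finset.

Section Exist.
Variables (m n : nat) (A : tensor m n).
Hypothesis A0 : nonneg_tensor A.
Hypothesis Hp : (0 < m.-1)%N.
Hypothesis Hirr : weakly_irreducible A.
Variable j0 : 'I_n.

Definition Pset : set RR := fun t => exists y : 'I_n -> RR,
  (forall i, 0 < y i) /\ forall i, t * y i ^+ m.-1 <= Fm A y i.

Lemma Pset_sup : has_sup Pset.
Proof.
split.
  exists 0; exists (fun=> 1); split => i; first exact: ltr01.
  by rewrite mul0r; apply: Fm_ge0 => // j; exact: ler01.
exists (\sum_i \sum_a A i a) => t [y [y0 H]].
case: (@arg_maxP _ _ _ j0 predT y isT) => i0 _ Hmax.
have yp : 0 < y i0 ^+ m.-1 by rewrite exprn_gt0.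
have h1 : Fm A y i0 <= (\sum_a A i0 a) * y i0 ^+ m.-1.
  rewrite /Fm mulr_suml; apply: ler_sum => a _; apply: ler_wpM2l; first exact: A0.
  have -> : y i0 ^+ m.-1 = \prod_(j < m.-1) y i0 by rewrite prodr_const card_ord.
  apply: ler_prod => j _.
  by rewrite ltW //=; apply: Hmax.
have h2 : t <= \sum_a A i0 a by rewrite -(ler_pM2r yp); apply: le_trans (H i0) h1.
apply: le_trans h2 _; rewrite (bigD1 i0) //= lerDl; apply: sumr_ge0 => i _.
by apply: sumr_ge0 => a _; exact: A0.
Qed.

Definition rho := sup Pset.

Lemma rho_ge0 : 0 <= rho.
Proof.
apply: (sup_upper_bound Pset_sup); exists (fun=> 1); split => i; first exact: ltr01.
by rewrite mul0r; apply: Fm_ge0 => // j; exact: ler01.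
Qed.

Lemma no_strict y : (forall i, 0 < y i) -> (forall i, rho * y i ^+ m.-1 < Fm A y i) -> False.
Proof.
move=> y0 H.
have [e re He] : exists2 e, rho < e & forall i, e * y i ^+ m.-1 <= Fm A y i.
  apply: fin_common => i; exists (Fm A y i / y i ^+ m.-1).
    by rewrite ltr_pdivlMr ?exprn_gt0.
  move=> e' /andP[_ h]; rewrite -ler_pdivlMr ?exprn_gt0 //.
have : Pset e by exists y.
move/(sup_upper_bound Pset_sup) => /=.
by rewrite leNgt re.
Qed.

Definition strictS (x : 'I_n -> RR) : {set 'I_n} :=
  [set i | rho * x i ^+ m.-1 < Fm A x i].

Definition good (x : 'I_n -> RR) :=
  (forall i, 0 <= x i) /\ (forall i, rho * x i ^+ m.-1 <= Fm A x i).

Lemma step x : good x -> strictS x != set0 ->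
  exists x', good x' /\ strictS x \proper strictS x'.
Proof.
move=> [x0 xle] Sn0; set S := strictS x.
have [e e0 He] : exists2 e, 0 < e & forall i, i \in S ->
    rho * (x i + e) ^+ m.-1 < Fm A x i.
  apply: fin_common => i; case: (boolP (i \in S)) => iS.
    have := iS; rewrite inE => h.
    have [e e0 He] := pow_gap rho_ge0 (x0 i) h.
    by exists e => // e' he' _; apply: He.
  by exists 1; [exact: ltr01 | move=> e' _ /negP].
pose x' j := x j + (if j \in S then e else 0).
have le_xx' : forall j, 0 <= x j <= x' j.
  move=> j; rewrite x0 /= /x' lerDl; case: ifP => _ //; exact: ltW.
have FM : forall i, Fm A x i <= Fm A x' i by move=> i; apply: Fm_mono.
have sub : forall i, i \in S -> rho * x' i ^+ m.-1 < Fm A x' i.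
  by move=> i iS; rewrite /x' iS; apply: lt_le_trans (He i iS) (FM i).
have gx' : good x'.
  split; first by move=> j; have /andP[h1 h2] := le_xx' j; apply: le_trans h1 h2.
  move=> i; case: (boolP (i \in S)) => iS; first exact: ltW (sub i iS).
  by rewrite /x' (negbTE iS) addr0; apply: le_trans (xle i) (FM i).
case: (S =P setT) => [ST | SnT].
  exfalso; apply: (@no_strict x') => i; last by apply: sub; rewrite ST inE.
  by rewrite /x' ST inE; apply: ltr_wpDl (x0 i) e0.
have hI1 : ~: S != set0.
  by apply/eqP => h; apply: SnT; apply: setC_inj; rewrite h setCT.
have hI2 : ~: S != setT.
  by apply/eqP => h; move/eqP: Sn0; apply; apply: setC_inj; rewrite h setC0.
have [i [a [Aia iI ha]]] := Hirr hI1 hI2.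
have iS : i \notin S by rewrite inE in iI.
have haS : forall j, a j \in S by move=> j; have := ha j; rewrite inE negbK.
exists x'; split => //; apply/properP; split.
  by apply/subsetP => j jS; rewrite inE; apply: sub.
exists i => //; rewrite inE.
have hd := Fm_diff A0 a i le_xx'.
have hpos : 0 < A i a * (\prod_(j < m.-1) x' (a j) - \prod_(j < m.-1) x (a j)).
  rewrite mulr_gt0 // subr_gt0; apply: ltr_prod.
    by apply/hasP; exists (Ordinal Hp) => //; rewrite mem_index_enum.
  by move=> j _; rewrite x0 /= /x' haS ltrDl.
have : Fm A x i < Fm A x' i by rewrite -subr_gt0; apply: lt_le_trans hpos hd.
rewrite /x' (negbTE iS) addr0; exact: le_lt_trans (xle i).
Qed.

Lemma growth k x : (n - #|strictS x| <= k)%N -> good x -> strictS x != set0 -> False.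
Proof.
elim: k x => [|k IH] x hk gx Sn; have [x' [gx' pr]] := step gx Sn;
  have h2 := proper_card pr;
  have h1 : (#|strictS x'| <= n)%N by
    apply: leq_trans (subset_leq_card (subsetT _)) _; rewrite cardsT card_ord.
  lia.
apply: (IH x') => //; first lia.
apply/eqP => h; move: h2; rewrite h cards0; lia.
Qed.

Lemma stepB x : good x -> (exists i, x i != 0) ->
  (forall i, 0 < x i) /\ forall i, Fm A x i = rho * x i ^+ m.-1.
Proof.
move=> gx [i1 xi1].
have S0 : strictS x = set0.
  by apply/eqP; apply/negP => /negP h; apply: (@growth n x) => //; apply: leq_subr.
have nS : forall i, ~~ (rho * x i ^+ m.-1 < Fm A x i).
  move=> i; have : i \notin strictS x by rewrite S0 inE.
  by rewrite inE.
have [x0 xle] := gx.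
split; last by move=> i; apply/eqP; rewrite eq_le xle andbT leNgt nS.
set Z : {set 'I_n} := finset (fun i => x i == 0).
suff Z0 : Z = set0.
  move=> i; rewrite lt_def x0 andbT; apply/negP => /eqP hi.
  have : i \in Z by rewrite inE hi.
  by rewrite Z0 inE.
apply/eqP; apply/negP => /negP hZ1.
have hZ2 : Z != setT.
  apply/eqP => h; have : i1 \in Z by rewrite h inE.
  by rewrite inE (negbTE xi1).
have [i [a [Aia iZ ha]]] := Hirr hZ1 hZ2.
have xi : x i = 0 by apply/eqP; rewrite inE in iZ.
have := nS i; rewrite xi expr0n eqn0Ngt Hp mulr0 /=.
move/negP; apply; apply: lt_le_trans (Fm_term A0 a i x0).
rewrite mulr_gt0 // prodr_gt0 // => j _.
by rewrite lt_def x0 andbT; have := ha j; rewrite inE.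
Qed.

End Exist.

Section Approx.
Variables (m n : nat) (A : tensor m n).
Hypothesis A0 : nonneg_tensor A.
Variable j0 : 'I_n.

Lemma approx (N : nat) : exists z : 'I_n -> RR,
  [/\ forall i, 0 <= z i <= 1, \sum_i z i = 1 &
      forall i, (rho A - N.+1%:R^-1) * z i ^+ m.-1 <= Fm A z i].
Proof.
have e0 : 0 < N.+1%:R^-1 :> RR by rewrite invr_gt0 ltr0n.
have [t [y [y0 hy]] ht] := sup_adherent e0 (Pset_sup A0 j0).
set s := \sum_i y i.
have yle : forall i, y i <= s.
  move=> i; rewrite /s (bigD1 i) //= lerDl; apply: sumr_ge0 => j _; exact: ltW.
have s0 : 0 < s := lt_le_trans (y0 j0) (yle j0).
exists (fun i => s^-1 * y i); split.
- move=> i; apply/andP; split; first by rewrite mulr_ge0 // ?invr_ge0 ltW.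
  rewrite mulrC ler_pdivrMr // mul1r; exact: yle.
- by rewrite -mulr_sumr mulVf // gt_eqF.
- move=> i; rewrite Fm_hom exprMn mulrCA; apply: ler_wpM2l.
    by rewrite exprn_ge0 // invr_ge0 ltW.
  apply: le_trans (hy i); apply: ler_wpM2r; first by rewrite exprn_ge0 // ltW.
  exact: ltW.
Qed.
End Approx.

Local Open Scope ring_scope.

Lemma rsum_ge0 (n' : nat) (J : finType) (T : 'I_n' -> J -> RR) i : 0 <= rsum T i.
Proof. by apply: sumr_ge0 => a _; exact: normr_ge0. Qed.

Theorem theorem3p5 (m n k : nat) (A : tensor m n) :
  (2 <= m)%N -> (1 <= n)%N -> (1 <= k)%N ->
  nonneg_tensor A -> weakly_irreducible A ->
  exists rho : RR,
    spectral_radius A rho /\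
    (* max_{B in S_k} min_i tratio = rho, the max being attained *)
    (exists B : tensor k n, S_k B /\ is_min_over (tratio A B) rho) /\
    (forall (B : tensor k n) (v : RR), S_k B -> is_min_over (tratio A B) v -> v <= rho) /\
    (* min_{B in S_k} max_i tratio = rho, the min being attained *)
    (exists B : tensor k n, S_k B /\ is_max_over (tratio A B) rho) /\
    (forall (B : tensor k n) (v : RR), S_k B -> is_max_over (tratio A B) v -> rho <= v).
Proof.
move=> hm hn hk A0 Hirr.
have Hp : (0 < m.-1)%N by rewrite -ltnS prednK ?(leq_trans _ hm).
pose j0 : 'I_n := Ordinal hn.
have [zf hz] := choice (approx A0 j0).
have [x [x0 [i1 xi1] xle]] := @limit_point _ _ _ _ A (fun a j => a j) (rho A) zf hz.
have [xpos xeig] := stepB A0 Hp Hirr j0 (conj x0 xle) (ex_intro _ i1 xi1).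
set r := rho A in xeig *.
have r0 : 0 <= r := rho_ge0 A0 j0.
pose b0 : {ffun 'I_k.-1 -> 'I_n} := [ffun => j0].
pose B : tensor k n := fun i b => if b == b0 then x i else 0.
have B0 : nonneg_tensor B by move=> i b; rewrite /B; case: ifP => _ //; exact: ltW.
have rB : forall i, rsum B i = x i.
  move=> i; rewrite /rsum (bigD1 b0) //= big1 ?addr0.
    by rewrite /B eqxx ger0_norm // ltW.
  by move=> b /negbTE hb; rewrite /B hb normr0.
have SB : S_k B by split => // i; rewrite rB gt_eqF.
have trB : forall i, tratio A B i = r.
  move=> i; rewrite /tratio RdivE rsum_gprod // rB.
  have -> : rsum B = x by apply/funext => j; rewrite rB.
  by rewrite xeig mulfK // expf_neq0 // gt_eqF.
have trG : forall B' : tensor k n, S_k B' -> forall i,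
    tratio A B' i = Fm A (rsum B') i / rsum B' i ^+ m.-1.
  by move=> B' [B'0 _] i; rewrite /tratio RdivE rsum_gprod.
have posG : forall B' : tensor k n, S_k B' -> forall i, 0 < rsum B' i.
  by move=> B' [_ h] i; rewrite lt_def h rsum_ge0.
exists r; split; last split; [| |split; [|split]].
-
  have nE : forall z : RR[i], `|z| = (ComplexField.Normc.normc z)%:C%C by [].
  split.
    exists (r%:C)%C; split; last by rewrite ger0_norm // ler0c.
    exists (fun i => (x i)%:C%C); split.
      exists j0; apply/eqP => /(congr1 (@complex.Re _)) /= h.
      by move: (xpos j0); rewrite h ltxx.
    move=> i; rewrite -rmorphXn -rmorphM -xeig /Fm rmorph_sum.
    by apply: eq_bigr => a _; rewrite rmorphM rmorph_prod.
  move=> l [z [[i2 zi] hzl]].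
  pose w i := ComplexField.Normc.normc (z i).
  have w0 : forall i, 0 <= w i.
    by move=> i; have := normr_ge0 (z i); rewrite nE ler0c.
  have wp : 0 < w i2.
    rewrite lt_def w0 andbT; apply/eqP => /ComplexField.Normc.eq0_normc h; move/eqP: zi; apply.
    exact: h.
  have key : forall i, ComplexField.Normc.normc l * w i ^+ m.-1 <= Fm A w i.
    move=> i; rewrite -lecR.
    have e1 : ((ComplexField.Normc.normc l) * w i ^+ m.-1)%:C%C = `|l * z i ^+ m.-1|.
      by rewrite rmorphM rmorphXn normrM normrX.
    rewrite e1 -hzl.
    apply: le_trans (ler_norm_sum _ _ _) _.
    rewrite /Fm rmorph_sum; apply: ler_sum => a _.
    rewrite normrM normr_prod rmorphM rmorph_prod ger0_norm ?ler0c //.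
  have := CW_lower A0 xpos xeig w0 (ex_intro _ i2 wp) key.
  by rewrite nE lecR.
- by exists B; split => //; split; [move=> i; rewrite trB | exists j0].
- move=> B' v hB' [hv _].
  apply: (CW_lower A0 xpos xeig (y := rsum B')).
  + by move=> i; exact: rsum_ge0.
  + by exists j0; exact: posG.
  + move=> i; have := hv i; rewrite trG // ler_pdivlMr //; exact: exprn_gt0 (posG _ hB' i).
- by exists B; split => //; split; [move=> i; rewrite trB | exists j0].
- move=> B' v hB' [hv _].
  apply: (CW_upper A0 xpos xeig j0 (y := rsum B')).
  + by move=> i; exact: posG.
  + move=> i; have := hv i; rewrite trG // ler_pdivrMr //; exact: exprn_gt0 (posG _ hB' i).
Qed.
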